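(* Fix a finite tensor order $N<\infty$. For an input tensor $\mathcal{Y}\in\mathbb{R}^{I_1\times\cdots\times I_N}$ let $P=\prod_{k=1}^N I_k$, $I_{(-k)}=\prod_{j\neq k}I_j$, let $r_k$ be the post-threshold rank of mode $k$, and $r_{(-k)}=\prod_{j\neq k}r_j$. Assume that, for each $k=1,\dots,N$, $r_k=\mathcal{O}(I_k^{\alpha_k})$ with $0\le\alpha_k<1$, and set $\alpha_{\max}=\max_k\alpha_k$. Suppose the computational cost of TARST is $$T_{\mathrm{TARST}}=\mathcal{O}\!\Bigg(\sum_{k=1}^{N}\Big[\min\{I_k^2 I_{(-k)},\,I_k I_{(-k)}^2\}+\min\{I_k,\,I_{(-k)}\}+\frac{P\,r_{(-k)}}{I_k}\Big]\Bigg).$$ Then $T_{\mathrm{TARST}}=\mathcal{O}(P^{1+\varepsilon})$ with $\varepsilon=\max\{1/2,\alpha_{\max}\}<1$; in particular TARST runs in polynomial time in the input size $P$, with exponent strictly less than $2$.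
   Context: TARST (Tensor Automatic Rank-free Singular-value Thresholding) is the following non-iterative algorithm on an $N$-way tensor $\mathcal{Y}$: for each mode $k$, form the mode-$k$ unfolding $\mathbf{Y}_{(k)}\in\mathbb{R}^{I_k\times I_{(-k)}}$ (mode-$k$ indices as rows, all other indices flattened into columns), compute its SVD, apply hard thresholding to its singular values with a data-dependent threshold $\tau_{(k)}$ (singular values below $\tau_{(k)}$ are set to zero), and let $r_k$ be the number of retained singular values (the post-threshold rank of mode $k$); then reconstruct a Tucker approximation $\hat{\mathcal{X}}=(\mathcal{Y}\times_1\mathbf{U}_{(1)}^\top\cdots\times_N\mathbf{U}_{(N)}^\top)\times_1\mathbf{U}_{(1)}\cdots\times_N\mathbf{U}_{(N)}$ from the retained left singular vectors $\mathbf{U}_{(k)}$. Under the dense linear algebra model, the three phases cost, per mode $k$: SVD $\mathcal{O}(\min\{I_k^2I_{(-k)},I_kI_{(-k)}^2\})$, thresholding $\mathcal{O}(\min\{I_k,I_{(-k)}\})$, reconstruction $\mathcal{O}(P\,r_{(-k)}/I_k)$; the total cost is the sum over modes. Asymptotic notation $\mathcal{O}(\cdot)$ refers to growth as the mode dimensions (hence $P$) grow, with $N$ fixed. *)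

(* Defs.v *)
From HB Require Import structures.
From mathcomp Require Import all_boot all_order all_algebra.
From mathcomp Require Import all_classical all_reals all_analysis.
Set Implicit Arguments. Unset Strict Implicit. Unset Printing Implicit Defensive.
Import Order.TTheory GRing.Theory Num.Theory.
Local Open Scope ring_scope.

(* Tensor of order N with mode dimensions I : 'I_N -> nat. *)

Definition tensor_size {N : nat} (I : 'I_N -> nat) : nat := (\prod_(k < N) I k)%N.

Definition prod_but {N : nat} (I : 'I_N -> nat) (k : 'I_N) : nat :=
  (\prod_(j < N | j != k) I j)%N.

(* The per-mode cost expression of TARST (SVD + thresholding + reconstruction),
   summed over the modes:
   sum_k [ min{I_k^2 I_(-k), I_k I_(-k)^2} + min{I_k, I_(-k)} + P r_(-k) / I_k ] *)
Definition tarst_cost_expr {R : realType} {N : nat} (I r : 'I_N -> nat) : R :=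
  \sum_(k < N)
    ( (minn (I k ^ 2 * prod_but I k) (I k * prod_but I k ^ 2))%:R
    + (minn (I k) (prod_but I k))%:R
    + (tensor_size I)%:R * (prod_but r k)%:R / (I k)%:R ).

(* alpha_max = max_k alpha_k (all alpha_k are >= 0, so 0 is a neutral start) *)
Definition alpha_max {R : realType} {N : nat} (alpha : 'I_N -> R) : R :=
  \big[Num.max/0]_(k < N) alpha k.

(* Main.v *)
Require Import Defs.
From HB Require Import structures.
From mathcomp Require Import all_boot all_order all_algebra.
From mathcomp Require Import all_classical all_reals all_analysis.
From mathcomp Require Import ring lra zify.
Import Order.TTheory GRing.Theory Num.Theory.
Local Open Scope classical_set_scope.
Local Open Scope ring_scope.

Lemma min_le_pow (R : realType) (a b : nat) (e : R) :
  1/2 <= e -> (1 <= a * b)%N -> ((minn a b)%:R : R) <= ((a * b)%:R) `^ e.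
Proof.
move=> he hab.
have hm : (minn a b * minn a b <= a * b)%N.
  by apply: leq_mul; [exact: geq_minl | exact: geq_minr].
have -> : ((minn a b)%:R : R) = Num.sqrt (((minn a b * minn a b)%N)%:R).
  by rewrite natrM -expr2 sqrtr_sqr normr_nat.
apply: (@le_trans _ _ (Num.sqrt ((a * b)%N%:R))).
  by rewrite ler_sqrt // ler_nat.
rewrite -powR12_sqrt //; apply: ler_powR; first by rewrite ler1n.
by rewrite -div1r.
Qed.

Lemma pow_prod (R : realType) (N : nat) (I : 'I_N -> nat) (P : pred 'I_N) (e : R) :
  \prod_(j < N | P j) ((I j)%:R `^ e) = ((\prod_(j < N | P j) I j)%N%:R) `^ e.
Proof.
rewrite natr_prod.
suff : 0 <= \prod_(j < N | P j) ((I j)%:R : R) /\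
  \prod_(j < N | P j) ((I j)%:R `^ e) = (\prod_(j < N | P j) ((I j)%:R : R)) `^ e by case.
apply: (big_ind2 (fun a b => 0 <= b /\ a = b `^ e)).
- by rewrite powR1.
- move=> a1 b1 a2 b2 [h1 ->] [h2 ->]; split; first exact: mulr_ge0.
  by rewrite powRM.
- by move=> j _; split.
Qed.

Lemma cost_bound (R : realType) (N : nat) (I r : 'I_N -> nat) (C e : R) :
  1 <= C -> 1/2 <= e -> (forall k, (0 < I k)%N) ->
  (forall k, ((r k)%:R : R) <= C * (I k)%:R `^ e) ->
  tarst_cost_expr I r <= (N%:R * (2 + C ^+ N)) * ((tensor_size I)%:R `^ (1 + e)).
Proof.
move=> C1 he HI Hr.
set P := tensor_size I.
have hP k : P = (I k * prod_but I k)%N by rewrite /P /tensor_size (bigD1 k).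
have P1 : (0 < P)%N by rewrite /P /tensor_size prodn_gt0.
have e0 : 0 <= e by lra.
have P1R : (1 : R) <= P%:R by rewrite ler1n.
set Q := (P%:R : R) `^ (1 + e).
have hQ : Q = P%:R * P%:R `^ e.
  rewrite /Q powRD ?powRr1 //; apply/implyP => /eqP; lra.
have Pe1 : 1 <= (P%:R : R) `^ e.
  by rewrite -[X in X <= _](powRr0 (P%:R : R)); apply: ler_powR.
have hPeQ : (P%:R : R) `^ e <= Q by rewrite hQ ler_peMl // powR_ge0.
have CN0 : 0 <= C ^+ N by rewrite exprn_ge0 //; lra.
have -> : (N%:R * (2 + C ^+ N)) * Q = \sum_(k < N) (Q + Q + C ^+ N * Q).
  by rewrite sumr_const card_ord -mulr_natl; ring.
apply: ler_sum => k _.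
have Ik := HI k.
have bpos : (0 < prod_but I k)%N by rewrite /prod_but prodn_gt0.
have hmin : ((minn (I k) (prod_but I k))%:R : R) <= P%:R `^ e.
  by rewrite (hP k); apply: min_le_pow => //; rewrite muln_gt0 Ik.
apply: lerD; first apply: lerD.
- have -> : minn (I k ^ 2 * prod_but I k) (I k * prod_but I k ^ 2) =
            (I k * prod_but I k * minn (I k) (prod_but I k))%N.
    by rewrite minnMr; congr minn; rewrite !expnS expn0; ring.
  rewrite natrM -(hP k) hQ; apply: ler_wpM2l => //.
- exact: le_trans hPeQ.
- have -> : (P%:R : R) * (prod_but r k)%:R / (I k)%:R =
            (prod_but I k)%:R * (prod_but r k)%:R.
    rewrite (hP k) natrM; field; rewrite pnatr_eq0 -lt0n //.
  have hr : ((prod_but r k)%:R : R) <= C ^+ N * (prod_but I k)%:R `^ e.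
    rewrite /prod_but natr_prod -pow_prod.
    apply: (@le_trans _ _ (\prod_(j < N | j != k) (C * (I j)%:R `^ e))).
      by apply: ler_prod => j _; rewrite ler0n Hr.
    rewrite big_split /=; apply: ler_wpM2r.
      by apply: prodr_ge0 => j _; exact: powR_ge0.
    have -> : C ^+ N = \prod_(j < N) C by rewrite prodr_const card_ord.
    rewrite [X in _ <= X](bigD1 k) //=; apply: ler_peMl => //.
    by apply: prodr_ge0 => j _; lra.
  have bP : ((prod_but I k)%:R : R) <= P%:R by rewrite ler_nat (hP k) leq_pmull.
  apply: (@le_trans _ _ ((prod_but I k)%:R * (C ^+ N * (prod_but I k)%:R `^ e))).
    by apply: ler_wpM2l.
  rewrite mulrCA hQ; apply: ler_wpM2l => //; apply: ler_pM => //.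
  by apply: ge0_ler_powR => //; rewrite nnegrE ler0n.
Qed.

Lemma cost_ge0 (R : realType) (N : nat) (I r : 'I_N -> nat) :
  0 <= (tarst_cost_expr I r : R).
Proof.
rewrite /tarst_cost_expr; apply: sumr_ge0 => k _.
by rewrite !addr_ge0 // mulr_ge0 // ?invr_ge0 // mulr_ge0.
Qed.
Theorem proposition1 (R : realType) (N : nat) (T : Type) (F : filter_on T)
    (I r : T -> 'I_N -> nat) (alpha : 'I_N -> R) (Tcost : T -> R) :
  (forall k, (fun t => ((I t k)%:R : R)) @ F --> +oo) ->
  (forall k, 0 <= alpha k < 1) ->
  (forall k, (fun t => ((r t k)%:R : R)) =O_F (fun t => ((I t k)%:R : R) `^ alpha k)) ->
  Tcost =O_F (fun t => tarst_cost_expr (I t) (r t) : R) ->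
  let eps := Num.max (1 / 2) (alpha_max alpha) in
  Tcost =O_F (fun t => ((tensor_size (I t))%:R : R) `^ (1 + eps)) /\ eps < 1.
Proof.
move=> HI Ha Hr HT eps.
have amax_lt1 : alpha_max alpha < 1.
  rewrite /alpha_max; apply: (big_ind (fun x => x < 1)) => //.
    by move=> x y hx hy; rewrite gt_max hx hy.
  by move=> k _; case/andP: (Ha k).
have ale k : alpha k <= eps.
  rewrite /eps le_max; apply/orP; right; exact: le_bigmax.
have he : 1 / 2 <= eps by rewrite /eps le_max lexx.
split; last by rewrite /eps gt_max amax_lt1 andbT; lra.
have H : forall k, exists2 c : R, 0 < c &
    \forall t \near F, `|((r t k)%:R : R)| <= c * `|((I t k)%:R : R) `^ alpha k|.
  by move=> k; apply/eqO_exP; exact: Hr k.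
have [c c0 hc] := fin_all_exists2 H.
set C := 1 + \sum_(k < N) c k.
have cC k : c k <= C.
  rewrite /C (bigD1 k) //=.
  have : 0 <= \sum_(i < N | i != k) c i by apply: sumr_ge0 => i _; exact: ltW.
  lra.
have C1 : 1 <= C.
  have : 0 <= \sum_(i < N) c i by apply: sumr_ge0 => i _; exact: ltW.
  rewrite /C; lra.
move/eqO_exP: HT => [k1 k10 hT].
apply/eqO_exP.
set K0 := N%:R * (2 + C ^+ N).
have K00 : 0 <= K0 by rewrite /K0 mulr_ge0 // addr_ge0 // exprn_ge0 //; lra.
exists (k1 * (K0 + 1)); first by rewrite mulr_gt0 //; lra.
have ev : \forall t \near F, forall k,
    (1 <= ((I t k)%:R : R)) /\ `|((r t k)%:R : R)| <= c k * `|((I t k)%:R : R) `^ alpha k|.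
  apply: filter_forall => k; near=> t; split; near: t.
    exact: (cvgry_ge (HI k) 1).
  exact: hc k.
near=> t.
have evt : forall k, (1 <= ((I t k)%:R : R)) /\
    `|((r t k)%:R : R)| <= c k * `|((I t k)%:R : R) `^ alpha k| by near: t; exact: ev.
have hTt : `|Tcost t| <= k1 * `|tarst_cost_expr (I t) (r t)| by near: t; exact: hT.
have cb : tarst_cost_expr (I t) (r t) <= K0 * (tensor_size (I t))%:R `^ (1 + eps).
  apply: cost_bound => // k.
    by have [h _] := evt k; rewrite -(ler_nat R).
  have [h1 h2] := evt k.
  move: h2; rewrite normr_nat ger0_norm ?powR_ge0 // => h2.
  apply: (le_trans h2); apply: ler_pM.
  all: try first [exact: ltW (c0 k) | exact: powR_ge0 | exact: cC].
  by apply: ler_powR; [exact: h1 | exact: ale].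
have cost0 : 0 <= (tarst_cost_expr (I t) (r t) : R).
  exact: cost_ge0.
have Q0 : 0 <= ((tensor_size (I t))%:R : R) `^ (1 + eps) by exact: powR_ge0.
rewrite (ger0_norm Q0); apply: (le_trans hTt).
rewrite (ger0_norm cost0) -mulrA; apply: ler_wpM2l; first exact: ltW.
apply: (le_trans cb); apply: ler_wpM2r => //; lra.
Unshelve. all: by end_near.
Qed.
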